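(* Let $\mathcal G$ be a finite, connected, simple bipartite graph with $N_{\mathcal V}$ vertices and $N_{\mathcal E}$ edges, each edge identified with $[0,1]$, and let $\mathcal L$ be the self-adjoint operator on $L^2(\mathcal G)$ described in the context. For $\lambda\in\mathbb C$ let $E(\lambda)$ denote the eigenspace of $\mathcal L$ with eigenvalue $\lambda$. Then \[\dim E(n^2\pi^2)=N_{\mathcal E}-N_{\mathcal V}+2,\qquad n=1,2,\dots.\]
   Context: $L^2(\mathcal G)=\bigoplus_{e\in\mathcal E}L^2(e)$ with each $L^2(e)=L^2[0,1]$. The operator $\mathcal L$ acts by $-d^2/dx^2$ on each edge, with domain consisting of $f\in L^2(\mathcal G)$ that are continuous on $\mathcal G$, continuously differentiable on each edge with $f_e'$ absolutely continuous and $f''\in L^2(\mathcal G)$, and satisfying at every vertex $v$ the condition $\sum_{e\sim v}\partial_\nu f_e(v)=0$, where the sum is over edges incident on $v$ and $\partial_\nu$ is the derivative in the local coordinate identifying $e$ with $[0,1]$ and $v$ with $0$. *)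

(* Defs.v *)
From Stdlib Require Import Reals List.
From Coquelicot Require Import Coquelicot.
Import ListNotations.
Open Scope R_scope.

(* A finite graph: vertices are 0 .. nV-1, edges a list of pairs (u,w).
   Edge number e (e < length E) is identified with [0,1], with u <-> 0 and w <-> 1. *)
Definition edge_ok (nV : nat) (E : list (nat * nat)) : Prop :=
  forall e, (e < length E)%nat ->
    (fst (nth e E (0%nat,0%nat)) < nV)%nat /\ (snd (nth e E (0%nat,0%nat)) < nV)%nat.

Definition simple_graph (nV : nat) (E : list (nat * nat)) : Prop :=
  edge_ok nV E /\
  (forall e, (e < length E)%nat -> fst (nth e E (0%nat,0%nat)) <> snd (nth e E (0%nat,0%nat))) /\
  (forall e1 e2, (e1 < length E)%nat -> (e2 < length E)%nat -> e1 <> e2 ->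
     let (a1, b1) := nth e1 E (0%nat,0%nat) in
     let (a2, b2) := nth e2 E (0%nat,0%nat) in
     ~ ((a1 = a2 /\ b1 = b2) \/ (a1 = b2 /\ b1 = a2))).

Definition adjacent (E : list (nat * nat)) (u w : nat) : Prop :=
  In (u, w) E \/ In (w, u) E.

Inductive reach (E : list (nat * nat)) : nat -> nat -> Prop :=
  | reach_refl : forall u, reach E u u
  | reach_step : forall u v w, reach E u v -> adjacent E v w -> reach E u w.

Definition connected_graph (nV : nat) (E : list (nat * nat)) : Prop :=
  (0 < nV)%nat /\ forall u w, (u < nV)%nat -> (w < nV)%nat -> reach E u w.

Definition bipartite_graph (E : list (nat * nat)) : Prop :=
  exists col : nat -> bool, forall u w, In (u, w) E -> col u <> col w.

Definition src (E : list (nat * nat)) (e : nat) : nat := fst (nth e E (0%nat,0%nat)).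
Definition tgt (E : list (nat * nat)) (e : nat) : nat := snd (nth e E (0%nat,0%nat)).

Definition has_deriv (f : R -> C) (x : R) (l : C) : Prop :=
  @is_derive R_AbsRing C_R_NormedModule f x l.

Fixpoint Csum (n : nat) (g : nat -> C) : C :=
  match n with O => RtoC 0 | S m => Cplus (Csum m g) (g m) end.

(* F e is the component of the function on edge e (only its values on [0,1] matter).
   F is an eigenfunction of L with eigenvalue lam (or zero) iff F is in the domain of L
   (continuity at vertices, C^2 on each closed edge -- eigenfunctions of -d^2/dx^2
   are automatically smooth --, Kirchhoff condition) and L F = lam F. *)
Definition in_eigenspace (nV : nat) (E : list (nat * nat)) (lam : C)
    (F : nat -> R -> C) : Prop :=
  exists (phi : nat -> C) (dF : nat -> R -> C),
    (forall e, (e < length E)%nat ->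
       (forall x, 0 <= x <= 1 -> has_deriv (F e) x (dF e x)) /\
       (forall x, 0 <= x <= 1 -> has_deriv (dF e) x (Copp (Cmult lam (F e x)))) /\
       F e 0 = phi (src E e) /\ F e 1 = phi (tgt E e)) /\
    (forall v, (v < nV)%nat ->
       Csum (length E) (fun e =>
         Cplus (if Nat.eqb (src E e) v then dF e 0 else RtoC 0)
               (if Nat.eqb (tgt E e) v then Copp (dF e 1) else RtoC 0))
       = RtoC 0).

Definition lin_indep (E : list (nat * nat)) (k : nat) (Fs : nat -> nat -> R -> C) : Prop :=
  forall c : nat -> C,
    (forall e x, (e < length E)%nat -> 0 <= x <= 1 ->
        Csum k (fun i => Cmult (c i) (Fs i e x)) = RtoC 0) ->
    forall i, (i < k)%nat -> c i = RtoC 0.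

Definition eigenspace_dim (nV : nat) (E : list (nat * nat)) (lam : C) (d : nat) : Prop :=
  (exists Fs : nat -> nat -> R -> C,
      (forall i, (i < d)%nat -> in_eigenspace nV E lam (Fs i)) /\ lin_indep E d Fs) /\
  (forall Fs : nat -> nat -> R -> C,
      (forall i, (i < S d)%nat -> in_eigenspace nV E lam (Fs i)) -> ~ lin_indep E (S d) Fs).

(* Main.v *)
From Stdlib Require Import Reals List Lra Lia.
From Coquelicot Require Import Coquelicot.
Require Import Defs.
Open Scope R_scope.

Lemma cos_nPI n : cos (INR n * PI) = (-1)^n.
Proof.
  induction n. simpl. rewrite Rmult_0_l, cos_0. ring.
  rewrite S_INR. replace ((INR n + 1) * PI) with (INR n * PI + PI) by ring.
  rewrite neg_cos, IHn. simpl; ring.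
Qed.

Lemma sin_nPI n : sin (INR n * PI) = 0.
Proof.
  induction n. simpl. rewrite Rmult_0_l, sin_0. ring.
  rewrite S_INR. replace ((INR n + 1) * PI) with (INR n * PI + PI) by ring.
  rewrite neg_sin, IHn. ring.
Qed.

Lemma is_derive_val (f : R -> R) x l l' : is_derive f x l -> l = l' -> is_derive f x l'.
Proof. intros H ->; exact H. Qed.

Lemma has_deriv_fst f x l : has_deriv f x l -> is_derive (fun y => fst (f y)) x (fst l).
Proof.
  intros H. unfold has_deriv, is_derive in *.
  exact (filterdiff_comp' f fst x _ fst H (filterdiff_linear _ is_linear_fst)).
Qed.

Lemma has_deriv_snd f x l : has_deriv f x l -> is_derive (fun y => snd (f y)) x (snd l).
Proof.
  intros H. unfold has_deriv, is_derive in *.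
  exact (filterdiff_comp' f snd x _ snd H (filterdiff_linear _ is_linear_snd)).
Qed.

Lemma ode_unique (k : R) (g dg : R -> R) : k <> 0 ->
  (forall x, 0 <= x <= 1 -> is_derive g x (dg x)) ->
  (forall x, 0 <= x <= 1 -> is_derive dg x (- (k*k) * g x)) ->
  forall x, 0 <= x <= 1 ->
    g x = g 0 * cos (k*x) + dg 0 / k * sin (k*x) /\
    dg x = - k * g 0 * sin (k*x) + dg 0 * cos (k*x).
Proof.
  intros Hk Hg Hdg.
  set (a := g 0). set (b := dg 0).
  set (r := fun t => g t - (a * cos (k*t) + b / k * sin (k*t))).
  set (dr := fun t => dg t - (- k * a * sin (k*t) + b * cos (k*t))).
  assert (Hr : forall t, 0 <= t <= 1 -> is_derive r t (dr t)).
  { intros t Ht. unfold r, dr.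
    apply (is_derive_minus g (fun t => a * cos (k*t) + b / k * sin (k*t))).
    apply Hg; exact Ht.
    auto_derive; auto. field. exact Hk. }
  assert (Hdr : forall t, 0 <= t <= 1 -> is_derive dr t (- (k*k) * r t)).
  { intros t Ht. unfold r, dr.
    eapply is_derive_val.
    apply (is_derive_minus dg (fun t => - k * a * sin (k*t) + b * cos (k*t))).
    apply Hdg; exact Ht.
    auto_derive; auto.
    unfold minus, plus, opp; simpl. field. exact Hk. }
  set (H := fun t => dr t * dr t + k*k*(r t * r t)).
  assert (HH : forall t, 0 <= t <= 1 -> is_derive H t 0).
  { intros t Ht. unfold H.
    eapply is_derive_val.
    apply (is_derive_plus (fun t => dr t * dr t) (fun t => k*k*(r t * r t))).
    apply (is_derive_mult dr dr); [apply Hdr; exact Ht | apply Hdr; exact Ht | intros; apply Rmult_comm].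
    apply is_derive_scal.
    apply (is_derive_mult r r); [apply Hr; exact Ht | apply Hr; exact Ht | intros; apply Rmult_comm].
    unfold plus, mult; simpl. ring. }
  assert (H0 : H 0 = 0).
  { unfold H, r, dr, a, b. rewrite Rmult_0_r, cos_0, sin_0. field. exact Hk. }
  intros x Hx.
  assert (Hx0 : H x = 0).
  { destruct (Req_dec x 0) as [->|Hne]. exact H0.
    rewrite <- H0. symmetry. apply eq_is_derive; [| lra].
    intros t Ht. apply HH. lra. }
  unfold H in Hx0.
  assert (Hkk : 0 < k*k).
  { destruct (Rtotal_order k 0) as [h|[h|h]]; [nra| contradiction | nra]. }
  assert (P1 : 0 <= dr x * dr x) by nra.
  assert (P2 : 0 <= r x * r x) by nra.
  assert (Q1 : dr x * dr x = 0) by nra.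
  assert (Q2 : r x * r x = 0) by nra.
  assert (r x = 0 /\ dr x = 0) as [E1 E2].
  { split; [destruct (Rmult_integral _ _ Q2)|destruct (Rmult_integral _ _ Q1)]; auto. }
  unfold r in E1. unfold dr in E2. split; lra.
Qed.

Lemma ode_C (k : R) (F dF : R -> C) : k <> 0 ->
  (forall x, 0 <= x <= 1 -> has_deriv F x (dF x)) ->
  (forall x, 0 <= x <= 1 -> has_deriv dF x (Copp (Cmult (RtoC (k*k)) (F x)))) ->
  forall x, 0 <= x <= 1 ->
    F x = Cplus (Cmult (F 0) (RtoC (cos (k*x)))) (Cmult (dF 0) (RtoC (sin (k*x) / k))) /\
    dF x = Cplus (Cmult (F 0) (RtoC (- k * sin (k*x)))) (Cmult (dF 0) (RtoC (cos (k*x)))).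
Proof.
  intros Hk HF HdF x Hx.
  assert (H1 : forall t, 0 <= t <= 1 -> is_derive (fun y => fst (F y)) t (fst (dF t))).
  { intros t Ht. apply has_deriv_fst. apply HF; exact Ht. }
  assert (H2 : forall t, 0 <= t <= 1 -> is_derive (fun y => fst (dF y)) t (- (k*k) * fst (F t))).
  { intros t Ht. eapply is_derive_val. apply has_deriv_fst. apply HdF; exact Ht.
    simpl. ring. }
  assert (H3 : forall t, 0 <= t <= 1 -> is_derive (fun y => snd (F y)) t (snd (dF t))).
  { intros t Ht. apply has_deriv_snd. apply HF; exact Ht. }
  assert (H4 : forall t, 0 <= t <= 1 -> is_derive (fun y => snd (dF y)) t (- (k*k) * snd (F t))).
  { intros t Ht. eapply is_derive_val. apply has_deriv_snd. apply HdF; exact Ht.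
    simpl. ring. }
  destruct (ode_unique k _ _ Hk H1 H2 x Hx) as [A1 B1].
  destruct (ode_unique k _ _ Hk H3 H4 x Hx) as [A2 B2].
  split; apply injective_projections; simpl.
  - rewrite A1. unfold Rdiv; ring.
  - rewrite A2. unfold Rdiv; ring.
  - rewrite B1. unfold Rdiv; ring.
  - rewrite B2. unfold Rdiv; ring.
Qed.

Definition Sfun (k : R) (a b : C) (x : R) : C :=
  Cplus (Cmult a (RtoC (cos (k*x)))) (Cmult b (RtoC (sin (k*x)))).

Lemma Sfun_deriv k a b x :
  has_deriv (Sfun k a b) x (Sfun k (Cmult b (RtoC k)) (Copp (Cmult a (RtoC k))) x).
Proof.
  unfold has_deriv.
  assert (E : forall y, @plus C_R_NormedModule (scal (cos (k*y)) a) (scal (sin (k*y)) b) = Sfun k a b y).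
  { intros y. unfold Sfun. apply injective_projections; simpl;
    unfold plus, scal; simpl; unfold prod_plus, prod_scal; simpl;
    unfold plus, scal, mult; simpl; unfold mult; simpl; ring. }
  apply (is_derive_ext _ _ x _ E).
  replace (Sfun k (Cmult b (RtoC k)) (Copp (Cmult a (RtoC k))) x)
    with (@plus C_R_NormedModule (scal (- k * sin (k*x)) a) (scal (k * cos (k*x)) b)).
  apply (@is_derive_plus R_AbsRing C_R_NormedModule).
  apply (@is_derive_scal_l R_AbsRing C_R_NormedModule (fun y => cos (k*y))); auto_derive; auto; ring.
  apply (@is_derive_scal_l R_AbsRing C_R_NormedModule (fun y => sin (k*y))); auto_derive; auto; ring.
  unfold Sfun. apply injective_projections; simpl;
    unfold plus, scal; simpl; unfold prod_plus, prod_scal; simpl;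
    unfold plus, scal, mult; simpl; unfold mult; simpl; ring.
Qed.

Lemma has_deriv_eq f x l l' : has_deriv f x l -> l = l' -> has_deriv f x l'.
Proof. intros H ->; exact H. Qed.

Lemma Sfun_deriv2 k a b x :
  has_deriv (Sfun k (Cmult b (RtoC k)) (Copp (Cmult a (RtoC k)))) x
    (Copp (Cmult (RtoC (k*k)) (Sfun k a b x))).
Proof.
  eapply has_deriv_eq. apply Sfun_deriv.
  unfold Sfun. apply injective_projections; simpl; ring.
Qed.

Lemma Sfun_0 k a b : Sfun k a b 0 = a.
Proof.
  unfold Sfun. rewrite Rmult_0_r, cos_0, sin_0.
  apply injective_projections; simpl; ring.
Qed.

Lemma Sfun_1 k a b : sin k = 0 -> Sfun k a b 1 = Cmult a (RtoC (cos k)).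
Proof.
  intros Hs. unfold Sfun. rewrite Rmult_1_r, Hs.
  apply injective_projections; simpl; ring.
Qed.

Definition kirchhoff (nV : nat) (E : list (nat * nat)) (dF : nat -> R -> C) : Prop :=
    (forall v, (v < nV)%nat ->
       Csum (length E) (fun e =>
         Cplus (if Nat.eqb (src E e) v then dF e 0 else RtoC 0)
               (if Nat.eqb (tgt E e) v then Copp (dF e 1) else RtoC 0))
       = RtoC 0).

Definition charP (nV : nat) (E : list (nat * nat)) (k : R) (F : nat -> R -> C)
  (phi : nat -> C) (dF : nat -> R -> C) : Prop :=
    (forall e, (e < length E)%nat ->
       (forall x, 0 <= x <= 1 ->
          F e x = Cplus (Cmult (F e 0) (RtoC (cos (k*x)))) (Cmult (dF e 0) (RtoC (sin (k*x) / k)))) /\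
       dF e 1 = Cmult (dF e 0) (RtoC (cos k)) /\
       F e 0 = phi (src E e) /\
       phi (tgt E e) = Cmult (phi (src E e)) (RtoC (cos k))) /\
    kirchhoff nV E dF.

Lemma eig_char nV E k F : k <> 0 -> sin k = 0 ->
  in_eigenspace nV E (RtoC (k*k)) F ->
  exists (phi : nat -> C) (dF : nat -> R -> C), charP nV E k F phi dF.
Proof.
  intros Hk Hs [phi [dF [H1 H2]]].
  exists phi, dF. unfold charP. split; [|exact H2].
  intros e He. destruct (H1 e He) as [D1 [D2 [P0 P1]]].
  assert (Hx : forall x, 0 <= x <= 1 ->
    F e x = Cplus (Cmult (F e 0) (RtoC (cos (k*x)))) (Cmult (dF e 0) (RtoC (sin (k*x) / k))) /\
    dF e x = Cplus (Cmult (F e 0) (RtoC (- k * sin (k*x)))) (Cmult (dF e 0) (RtoC (cos (k*x))))).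
  { intros x Hx. apply ode_C; auto. }
  assert (I1 : 0 <= 1 <= 1) by lra.
  destruct (Hx 1 I1) as [Q1 Q2].
  rewrite Rmult_1_r, Hs in Q1, Q2.
  split; [intros x Hx'; apply (Hx x Hx')|].
  split. rewrite Q2. apply injective_projections; simpl; ring.
  split. exact P0.
  rewrite <- P1, <- P0, Q1. apply injective_projections; simpl; unfold Rdiv; ring.
Qed.

Lemma lam_eq n : (INR n)^2 * PI^2 = (INR n * PI) * (INR n * PI).
Proof. ring. Qed.

Lemma k_neq0 n : (1 <= n)%nat -> INR n * PI <> 0.
Proof.
  intros Hn. apply Rgt_not_eq. apply Rmult_lt_0_compat.
  apply lt_0_INR. lia. exact PI_RGT_0.
Qed.

Lemma x1_prop n : (1 <= n)%nat ->
  (0 <= / (2 * INR n) /\ / (2 * INR n) <= 1) /\ sin ((INR n * PI) * / (2 * INR n)) <> 0.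
Proof.
  intros Hn. assert (H1 : 1 <= INR n) by (apply (le_INR 1); exact Hn).
  split. split.
  - left. apply Rinv_0_lt_compat. lra.
  - rewrite <- Rinv_1. apply Rinv_le_contravar; lra.
  - replace (INR n * PI * / (2 * INR n)) with (PI / 2) by (field; lra).
    rewrite sin_PI2. lra.
Qed.

Lemma sig_sq k : sin k = 0 -> Cmult (RtoC (cos k)) (RtoC (cos k)) = RtoC 1.
Proof.
  intros Hs. assert (H := sin2_cos2 k). rewrite Hs in H. unfold Rsqr in H.
  apply injective_projections; simpl; lra.
Qed.

From HB Require Import structures.
From mathcomp Require all_boot all_order all_algebra Rstruct.
From mathcomp Require zify.
From mathcomp Require ring.
From Stdlib Require Import IndefiniteDescription.
Module Alg.
Import all_boot all_order all_algebra Rstruct zify ring.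
Import GRing.Theory.
Set Implicit Arguments. Unset Strict Implicit. Unset Printing Implicit Defensive.
Open Scope ring_scope.

Definition CC : Type := Complex.C.
HB.instance Definition _ := Choice.copy CC (R * R)%type.

Lemma CC_addA : associative (Cplus : CC -> CC -> CC).
Proof. move=> x y z; by rewrite Cplus_assoc. Qed.
Lemma CC_addC : commutative (Cplus : CC -> CC -> CC).
Proof. move=> x y; exact: Cplus_comm. Qed.
Lemma CC_add0 : left_id (RtoC 0 : CC) Cplus.
Proof. move=> x; exact: Cplus_0_l. Qed.
Lemma CC_addN : left_inverse (RtoC 0 : CC) Copp Cplus.
Proof. move=> x; by rewrite Cplus_comm Cplus_opp_r. Qed.
HB.instance Definition _ := GRing.isZmodule.Build CC CC_addA CC_addC CC_add0 CC_addN.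

Lemma CC_mulA : associative (Cmult : CC -> CC -> CC).
Proof. move=> x y z; by rewrite Cmult_assoc. Qed.
Lemma CC_mulC : commutative (Cmult : CC -> CC -> CC).
Proof. move=> x y; exact: Cmult_comm. Qed.
Lemma CC_mul1 : left_id (RtoC 1 : CC) Cmult.
Proof. move=> x; exact: Cmult_1_l. Qed.
Lemma CC_mulDl : left_distributive (Cmult : CC -> CC -> CC) Cplus.
Proof. move=> x y z; exact: Cmult_plus_distr_r. Qed.
Lemma CC_1n0 : (RtoC 1 : CC) != (RtoC 0 : CC).
Proof. apply/eqP => /(f_equal fst) /= H; lra. Qed.
HB.instance Definition _ := GRing.Zmodule_isComNzRing.Build CC CC_mulA CC_mulC CC_mul1 CC_mulDl CC_1n0.

Lemma CC_mulV : forall x : CC, x != 0%R -> (Cmult (Cinv x) x : CC) = (1%R : CC).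
Proof. move=> x /eqP H. rewrite (Cinv_l x H). reflexivity. Qed.
Lemma CC_inv0 : (Cinv (0%R : CC) : CC) = (0%R : CC).
Proof. rewrite /Cinv /= . apply: injective_projections => /=; rewrite /Rdiv ?Rmult_0_l; (try rewrite Ropp_0); rewrite ?Rmult_0_r ?Rplus_0_r ?Rmult_0_l ?Rinv_0; lra. Qed.
HB.instance Definition _ := GRing.ComNzRing_isField.Build CC CC_mulV CC_inv0.

Lemma Csum_big n (g : nat -> CC) : Csum n g = \sum_(i < n) g i.
Proof.
elim: n => [|n IH] /=; first by rewrite big_ord0.
by rewrite big_ord_recr /= IH.
Qed.

Lemma CmultE (x y : C) : Cmult x y = (x : CC) * (y : CC). Proof. by []. Qed.
Lemma CplusE (x y : C) : Cplus x y = (x : CC) + (y : CC). Proof. by []. Qed.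
Lemma CoppE (x : C) : Copp x = - (x : CC). Proof. by []. Qed.
Lemma C0E : RtoC (IZR Z0) = (0 : CC). Proof. by []. Qed.

Definition vget n (p : 'rV[CC]_n) (v : nat) : CC :=
  if insub v is Some v' then p 0 v' else 0.

Lemma vget_lt n (p : 'rV[CC]_n) (v : nat) (hv : (v < n)%N) : vget p v = p 0 (Ordinal hv).
Proof. by rewrite /vget insubT. Qed.

Lemma vgetE n (p : 'rV[CC]_n) (v : 'I_n) : vget p v = p 0 v.
Proof. by rewrite (vget_lt p (ltn_ord v)); congr (p 0 _); apply: val_inj. Qed.

Lemma sum_ind n (f : 'I_n -> CC) (s : nat) (hs : (s < n)%N) :
  \sum_(v < n) f v * (if s == v then 1 else 0) = f (Ordinal hs).
Proof.
rewrite (bigD1 (Ordinal hs)) //= eqxx mulr1 big1 ?addr0 // => v hv.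
case: eqP => [E|]; last by rewrite mulr0.
by case/eqP: hv; apply: val_inj.
Qed.


Section Graph.
Variables (nV : nat) (E : list (nat * nat)) (sig : CC) (col : nat -> bool).
Hypothesis sig2 : sig * sig = 1.
Hypothesis Hok : edge_ok nV E.
Hypothesis Hcol : forall u w, In (u, w) E -> col u <> col w.
Hypothesis HnV : (0 < nV)%N.
Hypothesis Hreach : forall w, (w < nV)%N -> reach E 0 w.

Let m := length E.

Lemma src_lt e : (e < m)%N -> (src E e < nV)%N.
Proof. by move=> he; case: (Hok (e:=e) (elimT ltP he)) => /ltP. Qed.
Lemma tgt_lt e : (e < m)%N -> (tgt E e < nV)%N.
Proof. by move=> he; case: (Hok (e:=e) (elimT ltP he)) => _ /ltP. Qed.

Definition p0n (v : nat) : CC := if col v then 1 else sig.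

Lemma p0n_sq v : p0n v * p0n v = 1.
Proof. by rewrite /p0n; case: (col v) => //; rewrite mulr1. Qed.

Lemma p0n_neq0 v : p0n v != 0.
Proof. apply/eqP => h; have := p0n_sq v; rewrite h mul0r => /eqP; by rewrite eq_sym oner_eq0. Qed.

Lemma edge_in e : (e < m)%N -> In (src E e, tgt E e) E.
Proof.
move=> he; rewrite /src /tgt -surjective_pairing; apply: nth_In; exact/ltP.
Qed.

Lemma p0n_edge e : (e < m)%N -> p0n (src E e) = sig * p0n (tgt E e).
Proof.
move=> he; have := Hcol (edge_in he); rewrite /p0n.
by case: (col (src E e)); case: (col (tgt E e)) => // _; rewrite ?sig2 ?mulr1.
Qed.

Definition M : 'M[CC]_(m, nV) :=
  \matrix_(e, v) ((if src E e == v then 1 else 0) - sig * (if tgt E e == v then 1 else 0)).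

Lemma MT_entry (p : 'rV[CC]_nV) (e : 'I_m) :
  (p *m M^T) 0 e = vget p (src E e) - sig * vget p (tgt E e).
Proof.
rewrite !mxE.
under eq_bigr => v _ do rewrite !mxE mulrBr mulrCA.
rewrite sumrB -mulr_sumr.
rewrite (sum_ind (fun v => p 0 v) (src_lt (ltn_ord e))).
rewrite (sum_ind (fun v => p 0 v) (tgt_lt (ltn_ord e))).
by rewrite (vget_lt p (src_lt (ltn_ord e))) (vget_lt p (tgt_lt (ltn_ord e))).
Qed.

Lemma M_entry (b : 'rV[CC]_m) (v : 'I_nV) :
  (b *m M) 0 v = \sum_(e < m) b 0 e * ((if src E e == v then 1 else 0) - sig * (if tgt E e == v then 1 else 0)).
Proof. by rewrite !mxE; apply: eq_bigr => e _; rewrite !mxE. Qed.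

Definition p0 : 'rV[CC]_nV := \row_v p0n v.

Lemma p0_ker : p0 *m M^T = 0.
Proof.
apply/rowP => e; rewrite MT_entry.
rewrite (vget_lt p0 (src_lt (ltn_ord e))) (vget_lt p0 (tgt_lt (ltn_ord e))) !mxE.
by rewrite (p0n_edge (ltn_ord e)) subrr.
Qed.

Lemma reach_q (q : nat -> CC) :
  (forall e, (e < m)%N -> q (src E e) = q (tgt E e)) ->
  forall u w, reach E u w -> q w = q u.
Proof.
move=> Hq u w; elim => // u' v w' _ IH [] /(In_nth _ _ (0%N,0%N)) [e [/ltP he Hn]].
- by rewrite -IH; move: (Hq e he); rewrite /src /tgt Hn.
- by rewrite -IH; move: (Hq e he); rewrite /src /tgt Hn.
Qed.

Lemma ker_p0 (p : 'rV[CC]_nV) : p *m M^T = 0 -> p = (vget p 0 * p0n 0) *: p0.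
Proof.
move=> Hp.
have He : forall e, (e < m)%N -> vget p (src E e) = sig * vget p (tgt E e).
  move=> e he; move/rowP: Hp => /(_ (Ordinal he)); rewrite MT_entry mxE.
  by move/eqP; rewrite subr_eq0 => /eqP.
pose q v := vget p v * p0n v.
have Hq : forall e, (e < m)%N -> q (src E e) = q (tgt E e).
  move=> e he; rewrite /q He // p0n_edge // mulrCA !mulrA sig2 mul1r.
  by [].
apply/rowP => v; rewrite !mxE.
have := reach_q Hq (Hreach (ltn_ord v)); rewrite /q => Hv.
rewrite -vgetE -[vget p v]mulr1 -(p0n_sq v) mulrA Hv.
by [].
Qed.

Lemma p0_neq0 : p0 != 0.
Proof.
apply/eqP => /rowP /(_ (Ordinal HnV)); rewrite !mxE => h.
by have := p0n_neq0 0; rewrite h eqxx.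
Qed.

Lemma rank_kerT : \rank (kermx M^T) = 1%N.
Proof.
apply/eqP; rewrite eqn_leq; apply/andP; split.
  have hs : (kermx M^T <= p0)%MS.
    apply/row_subP => i; apply/sub_rVP.
    exists (vget (row i (kermx M^T)) 0 * p0n 0); apply: ker_p0.
    by rewrite -row_mul mulmx_ker row0.
  exact: (leq_trans (mxrankS hs) (rank_leq_row p0)).
apply: (@leq_trans (\rank p0)); last by apply: mxrankS; apply/sub_kermxP; exact: p0_ker.
by rewrite lt0n mxrank_eq0 p0_neq0.
Qed.

Lemma rankM : \rank M = (nV - 1)%N.
Proof.
have := mxrank_ker M^T; rewrite rank_kerT mxrank_tr => h.
have := rank_leq_col M; lia.
Qed.

Lemma rank_kerM : \rank (kermx M) = (m + 1 - nV)%N.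
Proof.
rewrite mxrank_ker rankM; have := rank_leq_row M; rewrite rankM; lia.
Qed.

Lemma nV_le : (nV <= m.+1)%N.
Proof. have := rank_leq_row M; rewrite rankM; lia. Qed.

Variable k : R.
Hypothesis Hk : k <> IZR Z0.
Hypothesis Hs : sin k = IZR Z0.
Hypothesis Hsig : sig = RtoC (cos k).

Lemma eqbE a b : Nat.eqb a b = (a == b)%N.
Proof.
case: (PeanoNat.Nat.eqb_spec a b) => [->|h]; first by rewrite eqxx.
by apply/esym/eqP.
Qed.

Let r := \rank (kermx M).
Let B := row_base (kermx M).

Definition Bget (i e : nat) : CC := if insub i is Some i' then vget (row i' B) e else 0.

Definition Flow (i : nat) : nat -> R -> C :=
  match i with
  | 0%N => fun e => Sfun k (p0n (src E e)) 0
  | S j => fun e => Sfun k 0 (Bget j e)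
  end.

Lemma B_ker : B *m M = 0.
Proof. apply/sub_kermxP; by rewrite eq_row_base. Qed.

Lemma Bget_ker j (v : 'I_nV) :
  \sum_(e < m) Bget j e * ((if src E e == v then 1 else 0) - sig * (if tgt E e == v then 1 else 0)) = 0.
Proof.
rewrite /Bget; case: insubP => [j' _ _|_]; last by rewrite big1 // => e _; rewrite mul0r.
have h : (row j' B *m M) 0 v = 0 by rewrite -row_mul B_ker row0 mxE.
rewrite M_entry in h; apply: etrans h.
by apply: eq_bigr => e _; rewrite vgetE.
Qed.

Lemma Flow_eig i : in_eigenspace nV E (RtoC (k*k)) (Flow i).
Proof.
case: i => [|j].
- exists p0n, (fun e => Sfun k (Cmult 0 (RtoC k)) (Copp (Cmult (p0n (src E e)) (RtoC k)))).
  split.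
  + move=> e /ltP he; split; [move=> x _; exact: Sfun_deriv|].
    split; [move=> x _; exact: Sfun_deriv2|].
    split; first by rewrite /= Sfun_0.
    rewrite /= Sfun_1 // -Hsig.
    change ((p0n (src E e) : CC) * sig = p0n (tgt E e)).
    by rewrite (p0n_edge he) mulrAC sig2 mul1r.
  + move=> v _; rewrite Csum_big big1 // => e _.
    rewrite Sfun_0 Sfun_1 //.
    change ((if Nat.eqb (src E e) v then (0 : CC) * RtoC k else 0) +
            (if Nat.eqb (tgt E e) v then - ((0 : CC) * RtoC k * RtoC (cos k)) else 0) = 0).
    by rewrite !mul0r oppr0; case: ifP; case: ifP; rewrite ?addr0.
- exists (fun _ => RtoC 0), (fun e => Sfun k (Cmult (Bget j e) (RtoC k)) (Copp (Cmult 0 (RtoC k)))).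
  split.
  + move=> e /ltP he; split; [move=> x _; exact: Sfun_deriv|].
    split; [move=> x _; exact: Sfun_deriv2|].
    split; first by rewrite /= Sfun_0.
    rewrite /= Sfun_1 //.
    change ((0 : CC) * RtoC (cos k) = 0); by rewrite mul0r.
  + move=> v /ltP hv; rewrite Csum_big.
    have := Bget_ker j (Ordinal hv) => /(congr1 (fun z => (RtoC k : CC) * z)).
    rewrite mulr0 mulr_sumr => h; apply: etrans h.
    apply: eq_bigr => e _.
    rewrite Sfun_0 Sfun_1 // !eqbE -Hsig /=.
    change ((if src E e == v then Bget j e * RtoC k else 0) +
            (if tgt E e == v then - (Bget j e * RtoC k * sig) else 0) =
            (RtoC k : CC) * (Bget j e * ((if src E e == v then 1 else 0) - sig * (if tgt E e == v then 1 else 0)))).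
    by case: ifP; case: ifP => _ _; ring.
Qed.

Hypothesis Hm : (0 < m)%N.
Variable x1 : R.
Hypothesis Hx1 : Rle (IZR Z0) x1 /\ Rle x1 (IZR 1).
Hypothesis Hsx1 : sin (Rmult k x1) <> IZR Z0.

Lemma Flow0 i e : Flow i e (IZR Z0) = if i is 0%N then p0n (src E e) else 0.
Proof. by case: i => [|j] /=; rewrite Sfun_0. Qed.

Lemma Flow_x1 j e : Flow j.+1 e x1 = (Bget j e : CC) * RtoC (sin (Rmult k x1)).
Proof.
rewrite /= /Sfun.
change ((0 : CC) * RtoC (cos (Rmult k x1)) + Bget j e * RtoC (sin (Rmult k x1)) = Bget j e * RtoC (sin (Rmult k x1))).
by rewrite mul0r add0r.
Qed.

Lemma Flow_indep : lin_indep E r.+1 Flow.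
Proof.
move=> c Hc.
have h0 : Rle (IZR Z0) (IZR Z0) /\ Rle (IZR Z0) (IZR 1) by split; [apply: Rle_refl | apply: Rle_0_1].
have c0 : c 0%N = 0.
  have := Hc 0%N (IZR Z0) (elimT ltP Hm) h0; rewrite Csum_big big_ord_recl.
  rewrite big1 => [|i _]; last by rewrite Flow0 /=; exact: mulr0.
  rewrite addr0 Flow0 => /eqP.
  change (((c 0%N : CC) * p0n (src E 0)) == 0 -> c 0%N = 0).
  by rewrite mulf_eq0 (negbTE (p0n_neq0 _)) orbF => /eqP.
have hs : (RtoC (sin (Rmult k x1)) : CC) != 0.
  apply/eqP => /(f_equal fst) /=; exact: Hsx1.
pose cv : 'rV[CC]_r := \row_(i < r) c i.+1.
have hcv : cv *m B = 0 *m B.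
  rewrite mul0mx; apply/rowP => e; rewrite !mxE.
  have := Hc e x1 (elimT ltP (ltn_ord e)) Hx1; rewrite Csum_big big_ord_recl c0.
  under eq_bigr do rewrite CmultE.
  rewrite CmultE mul0r add0r => h.
  have : (\sum_(j < r) cv 0 j * B j e) * RtoC (sin (Rmult k x1)) = 0.
    apply: (etrans _ h); rewrite mulr_suml; apply: eq_bigr => i _.
    rewrite lift0 Flow_x1 /Bget valK vgetE !mxE mulrA.
    by [].
  by move/eqP; rewrite mulf_eq0 (negbTE hs) orbF => /eqP.
have cv0 := row_free_inj (row_base_free (kermx M)) hcv.
move=> i /ltP; case: i => [|i] hi; first exact: c0.
have hi' : (i < r)%N by [].
by move/rowP: cv0 => /(_ (Ordinal hi')); rewrite !mxE.
Qed.

Lemma upper (Fs : nat -> nat -> R -> C) :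
  (forall i, (i < r.+2)%coq_nat -> in_eigenspace nV E (RtoC (Rmult k k)) (Fs i)) ->
  ~ lin_indep E r.+2 Fs.
Proof.
move=> HF Hind.
have H' : forall i, exists pd : (nat -> C) * (nat -> R -> C),
    (i < r.+2)%N -> charP nV E k (Fs i) pd.1 pd.2.
  move=> i; case: (ltnP i r.+2) => hi.
    have [phi [dF H]] := eig_char nV E k (Fs i) Hk Hs (HF i (elimT ltP hi)); by exists (phi, dF).
  exists (fun _ => RtoC (IZR Z0), fun _ _ => RtoC (IZR Z0)) => h; exfalso; lia.
pose pd i := proj1_sig (constructive_indefinite_description _ (H' i)).
have Hpd : forall i, (i < r.+2)%N -> charP nV E k (Fs i) (pd i).1 (pd i).2.
  move=> i; exact: (proj2_sig (constructive_indefinite_description _ (H' i))).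
pose Gm : 'M[CC]_(r.+2, 1) := \matrix_(i, j) (((pd i).1 0%N : CC) * p0n 0).
pose Bm : 'M[CC]_(r.+2, m) := \matrix_(i, e) ((pd i).2 e (IZR Z0) : CC).
have cA : forall (i : 'I_r.+2) e, (e < m)%N -> ((pd i).1 (src E e) : CC) = Gm i 0 * p0n (src E e).
  move=> i e he.
  have [C1 _] := Hpd i (ltn_ord i).
  pose q : 'rV[CC]_nV := \row_v ((pd i).1 v : CC).
  have hq : q *m M^T = 0.
    apply/rowP => e'; rewrite MT_entry (vget_lt q (src_lt (ltn_ord e'))) (vget_lt q (tgt_lt (ltn_ord e'))) !mxE.
    have [_ [_ [_ F4]]] := C1 e' (elimT ltP (ltn_ord e')).
    rewrite F4 CmultE -Hsig.
    by rewrite mulrCA sig2 mulr1 subrr.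
  move/rowP: (ker_p0 hq) => /(_ (Ordinal (src_lt he))).
  by rewrite !mxE (vget_lt q HnV) !mxE.
have cB : Bm *m M = 0.
  apply/matrixP => i v; rewrite !mxE.
  under eq_bigr => e _ do rewrite !mxE.
  have [_ K] := Hpd i (ltn_ord i).
  have Kv := K v (elimT ltP (ltn_ord v)); rewrite Csum_big in Kv.
  apply: (etrans _ Kv); apply: eq_bigr => e _.
  have [C1 _] := Hpd i (ltn_ord i).
  have [_ [F2 _]] := C1 e (elimT ltP (ltn_ord e)).
  rewrite !eqbE; rewrite F2 CplusE CmultE -Hsig.
  case: ifP; case: ifP => _ _; rewrite ?CoppE ?C0E; set z := ((pd i).2 _ (IZR Z0)); match goal with |- ?a = ?b => change (@eq CC a b) end; ring.
pose X := row_mx Gm Bm.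
have cC : (\rank X <= r.+1)%N.
  have -> : X = row_mx Gm (0 : 'M[CC]_(r.+2, m)) + row_mx (0 : 'M[CC]_(r.+2, 1)) Bm by rewrite add_row_mx addr0 add0r.
  apply: (leq_trans (mxrank_add _ _)).
  have h1 : (\rank (row_mx Gm (0 : 'M[CC]_(r.+2, m))) <= 1)%N.
    have -> : row_mx Gm (0 : 'M[CC]_(r.+2, m)) = Gm *m row_mx 1%:M (0 : 'M[CC]_(1, m)) by rewrite mul_mx_row mulmx1 mulmx0.
    exact: (leq_trans (mxrankM_maxl _ _) (rank_leq_col _)).
  have h2 : (\rank (row_mx (0 : 'M[CC]_(r.+2, 1)) Bm) <= r)%N.
    have -> : row_mx (0 : 'M[CC]_(r.+2, 1)) Bm = Bm *m row_mx (0 : 'M[CC]_(m, 1)) 1%:M by rewrite mul_mx_row mulmx1 mulmx0.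
    apply: (leq_trans (mxrankM_maxl _ _)).
    by apply: mxrankS; apply/sub_kermxP.
  lia.
have nf : ~~ row_free X.
  by apply/negP; rewrite /row_free => /eqP h; move: cC; rewrite h ltnn.
rewrite -kermx_eq0 in nf.
have [i hi] : exists i, row i (kermx X) != 0.
  case: (pickP (fun i => row i (kermx X) != 0)) => [i hi | h]; first by exists i.
  move: nf; have -> : kermx X = 0; last by rewrite eqxx.
  by apply/row_matrixP => i; rewrite row0; apply/eqP; move: (h i) => /= /negbFE.
pose c := row i (kermx X).
have cX : c *m X = 0 by rewrite -row_mul mulmx_ker row0.
have : row_mx (c *m Gm) (c *m Bm) = row_mx 0 0 by rewrite row_mx0 -mul_mx_row.
case/eq_row_mx => cG cBm.
have c0 : c = 0.
  apply/rowP => j; rewrite [RHS]mxE -vgetE; apply: (Hind (vget c)); last exact/ltP.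
  move=> e x /ltP he hx.
  rewrite Csum_big C0E.
  have eq1 : forall l : 'I_r.+2, (Cmult (vget c l) (Fs l e x) : CC) =
      (c 0 l * Gm l 0) * (p0n (src E e) * RtoC (cos (Rmult k x))) +
      (c 0 l * Bm l (Ordinal he)) * RtoC (Rdiv (sin (Rmult k x)) k).
    move=> l; have [C1 _] := Hpd l (ltn_ord l).
    have [F1 [_ [F3 _]]] := C1 e (elimT ltP he).
    rewrite (F1 x hx) F3 vgetE !CmultE CplusE (cA l e he) !mxE.
    ring.
  under eq_bigr => l _ do rewrite eq1.
  rewrite big_split /= -!mulr_suml.
  have -> : \sum_(j < r.+2) c 0 j * Gm j 0 = 0.
    by move/matrixP: cG => /(_ 0 0); rewrite !mxE.
  have -> : \sum_(j < r.+2) c 0 j * Bm j (Ordinal he) = 0.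
    by move/matrixP: cBm => /(_ 0 (Ordinal he)); rewrite !mxE.
  by rewrite !mul0r addr0.
by move: hi; rewrite -/c c0 eqxx.
Qed.

Lemma dim_main : eigenspace_dim nV E (RtoC (Rmult k k)) (Nat.sub (Nat.add m 2) nV).
Proof.
have hd : Nat.sub (Nat.add m 2) nV = r.+1.
  have := rank_kerM; have := nV_le; rewrite -/r; lia.
rewrite hd; split.
  exists Flow; split; [move=> i _; exact: Flow_eig | exact: Flow_indep].
move=> Fs HF; exact: upper.
Qed.

End Graph.

Lemma main_thm (nV : nat) (E : list (nat * nat)) :
  simple_graph nV E -> connected_graph nV E -> bipartite_graph E ->
  (0 < length E)%coq_nat ->
  forall n : nat, (1 <= n)%coq_nat ->
    eigenspace_dim nV E (RtoC (Rmult (pow (INR n) 2) (pow PI 2)))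
      (Nat.sub (Nat.add (length E) 2) nV).
Proof.
move=> [Hok _] [HnV Hconn] [col Hcol] Hm n Hn.
rewrite lam_eq.
have Hk := k_neq0 n Hn.
have Hs := sin_nPI n.
have [Hx1 Hsx1] := x1_prop n Hn.
apply: (@dim_main nV E (RtoC (cos (Rmult (INR n) PI))) col _ Hok Hcol _ _ (Rmult (INR n) PI) Hk Hs erefl _ _ Hx1 Hsx1).
- exact: sig_sq.
- exact/ltP.
- move=> w /ltP hw; apply: Hconn => //; exact/ltP.
- exact/ltP.
Qed.
End Alg.


Theorem theorem2p3 (nV : nat) (E : list (nat * nat)) :
  simple_graph nV E -> connected_graph nV E -> bipartite_graph E ->
  (0 < length E)%nat ->
  forall n : nat, (1 <= n)%nat ->
    eigenspace_dim nV E (RtoC ((INR n)^2 * PI^2))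
      (length E + 2 - nV)%nat.
Proof.
  exact (@Alg.main_thm nV E).
Qed.
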